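(* Let $P$ be the poset encoded by $011$ (height 3, with $P(0)\cup P(1)$ of type $3C$ and $P(1)\cup P(2)$, $P(2)\cup P(3)$ 6-crowns). If $D$ is a down-set of $P$ and $r:P\setminus D\to R$ is a retraction onto a 4-crown stack or a 2-element antichain, then $D$ contains at least two points of $P(0)$.
   Context: All posets are finite; level sets $P(0)=\min P$, $P(k+1)=\min(P\setminus\bigcup_{i\le k}P(i))$; $A<B$ means $a<b$ for all $a\in A,b\in B$. A retraction is an idempotent order-preserving self-map; its image is a retract. A 4-crown stack is an ordinal sum of at least two 2-element antichains. A 6-crown is $x_0<y_0>x_1<y_1>x_2<y_2>x_0$ with no other comparabilities; type $3C$ means three disjoint 2-element chains with no further comparabilities. Encoding: for a binary string $b_0b_1\cdots b_{n-1}$ ($n\ge1$), the encoded poset is the (unique up to isomorphism) poset $Q$ of height $n$ whose level sets $Q(0),\dots,Q(n)$ are 3-element antichains, with $Q(k)<Q(\ell)$ whenever $\ell\ge k+2$, and with $Q(k)\cup Q(k+1)$ a 6-crown if $b_k=1$ and of type $3C$ if $b_k=0$; all comparabilities follow from these (the structure is that of a consecutive segment of a nice section of width three with horizon 2). *)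

(* Defs.v *)
From mathcomp Require Import all_boot.
Set Implicit Arguments. Unset Strict Implicit. Unset Printing Implicit Defensive.

(* Elements of the poset encoded by a binary string b of length n:
   pairs (k, i) with k : 'I_(n+1) the level and i : 'I_3 the position.   *)
Definition enc_elt (n : nat) := ('I_n.+1 * 'I_3)%type.

(* Comparabilities between consecutive levels k, k+1:
   x_i < y_j iff j = i (type 3C, bit 0), or j = i or j = i-1 mod 3
   (6-crown x_0<y_0>x_1<y_1>x_2<y_2>x_0 with the labelling x_i<y_i, x_i<y_(i-1)). *)
Definition enc_adj (c : bool) (i j : 'I_3) : bool :=
  (j == i :> nat) || (c && (j == (i + 2) %% 3 :> nat)).

Definition enc_le (b : seq bool) (x y : enc_elt (size b)) : bool :=
  [|| x == y,
      (x.1 + 2 <= y.1)%N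
    | (y.1 == x.1 + 1 :> nat) && enc_adj (nth false b x.1) x.2 y.2].

(* Minimal elements, i.e. the level set P(0) = min P. *)
Definition min_set (T : finType) (le : rel T) : {set T} :=
  [set x | [forall y, le y x ==> (y == x)]].

Definition down_set (T : finType) (le : rel T) (D : {set T}) : Prop :=
  forall x y, y \in D -> le x y -> x \in D.

Definition retraction_on (T : finType) (le : rel T) (U : {set T}) (r : T -> T) : Prop :=
  [/\ forall x, x \in U -> r x \in U,
      forall x y, x \in U -> y \in U -> le x y -> le (r x) (r y)
    & forall x, x \in U -> r (r x) = r x].

(* R (with the induced order) is an ordinal sum of m >= 2 two-element antichains. *)
Definition four_crown_stack (T : finType) (le : rel T) (R : {set T}) : Prop :=
  exists (m : nat) (f : T -> nat),
    [/\ (2 <= m)%N,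
        forall x, x \in R -> (f x < m)%N,
        forall k, (k < m)%N -> #|[set x in R | f x == k]| = 2
      & forall x y, x \in R -> y \in R -> x != y -> (le x y = (f x < f y)%N)].

Definition two_antichain (T : finType) (le : rel T) (R : {set T}) : Prop :=
  #|R| = 2 /\ forall x y, x \in R -> y \in R -> x != y -> ~~ le x y.

Definition P011 := [:: false; true; true].

(* Main.v *)
Require Import Defs.
From mathcomp Require Import all_boot zify.
Set Implicit Arguments. Unset Strict Implicit. Unset Printing Implicit Defensive.
Set Implicit Arguments. Unset Strict Implicit. Unset Printing Implicit Defensive.

Fixpoint allL (p : nat -> bool) (s : seq nat) := if s is x :: s' then (if p x then allL p s' else false) else true.
Fixpoint hasL (p : nat -> bool) (s : seq nat) := if s is x :: s' then (if p x then true else hasL p s') else false.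
Definition codes := iota 0 12.
Definition lvl n := n %/ 3.
Definition pos n := n %% 3.
Definition lenat a b := [|| a == b, lvl a + 2 <= lvl b |
  (lvl b == lvl a + 1) && ((pos b == pos a) || (nth false P011 (lvl a) && (pos b == (pos a + 2) %% 3)))].
Definition mem (s : seq bool) n := nth false s n.
Definition downN d := allL (fun a => allL (fun b => if mem d b then (if lenat a b then mem d a else true) else true) codes) codes.
Definition minN n := allL (fun m => if lenat m n then m == n else true) codes.
Definition twoMins d := hasL (fun a => if mem d a then if minN a then hasL (fun b => if a != b then if mem d b then minN b else false else false) codes else false else false) codes.
Definition subsetN r d := allL (fun n => if mem r n then ~~ mem d n else true) codes.
Definition incN a b := if lenat a b then false else ~~ lenat b a.
Definition anti2 r := hasL (fun a => hasL (fun b => if a != b then if incN a b then allL (fun n => mem r n == ((n == a) || (n == b))) codes else false else false) codes) codes.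
Definition stackN r :=
  if allL (fun n => if mem r n then hasL (fun m => if mem r m then if m != n then if incN n m then
        allL (fun m' => if mem r m' then if incN n m' then m' == m else true else true) codes else false else false else false) codes else true) codes
  then hasL (fun a => if mem r a then hasL (fun b => if mem r b then if a != b then lenat a b else false else false) codes else false) codes
  else false.
Definition condN r := if anti2 r then true else stackN r.
Definition cand (tbl : seq (seq bool)) n v := nth false (nth [::] tbl n) v.
Definition row0 r n := if mem r n then [seq v == n | v <- codes] else r.
Definition tbl0 r := [seq row0 r n | n <- codes].
Definition stepN d tbl := [seq [seq if cand tbl n v then allL (fun y => if mem d y then true else
   (if lenat n y then hasL (fun w => if cand tbl y w then lenat v w else false) codes else true) &&
   (if lenat y n then hasL (fun w => if cand tbl y w then lenat w v else false) codes else true)) codes else false | v <- codes] | n <- codes].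
Definition refutedN d r := hasL (fun n => if mem d n then false else ~~ hasL (cand (iter 3 (stepN d) (tbl0 r)) n) codes) codes.
Fixpoint subs n : seq (seq bool) := if n is m.+1 then [seq b :: s | b <- [:: true; false], s <- subs m] else [:: [::]].
Definition checkR d r := if subsetN r d then refutedN d r else true.
Definition checkD (good : seq (seq bool)) d := if downN d then if twoMins d then true else all (checkR d) good else true.
Definition checkAll := let good := filter condN (subs 12) in all (checkD good) (subs 12).

Lemma big : checkAll = true.
Proof. vm_compute. reflexivity. Qed.

Lemma allLE p s : allL p s = all p s.
Proof. by elim: s => //= x s IH; rewrite IH; case: (p x). Qed.
Lemma hasLE p s : hasL p s = has p s.
Proof. by elim: s => //= x s IH; rewrite IH; case: (p x). Qed.
Lemma ifand (a b : bool) : (if a then b else false) = a && b.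
Proof. by case: a. Qed.

Definition T := enc_elt (size P011).
Definition code (x : T) : nat := x.1 * 3 + x.2.
Definition decode (n : nat) : T := (inord (lvl n), inord (pos n)).

Lemma lvl_code x : lvl (code x) = x.1.
Proof. by rewrite /lvl /code divnMDl // divn_small ?addn0 // ltn_ord. Qed.
Lemma pos_code x : pos (code x) = x.2.
Proof. by rewrite /pos /code modnMDl modn_small // ltn_ord. Qed.
Lemma decodeK x : decode (code x) = x.
Proof. by rewrite /decode lvl_code pos_code !inord_val; case: x. Qed.
Lemma code_lt x : code x < 12.
Proof.
have h1 : x.1 < 4 := ltn_ord x.1. have h2 : x.2 < 3 := ltn_ord x.2.
rewrite /code. lia.
Qed.
Lemma codeK n : n < 12 -> code (decode n) = n.
Proof.
move=> hn; rewrite /code /decode /= !inordK /lvl /pos.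
- by rewrite -divn_eq.
- by rewrite ltn_pmod.
- rewrite ltn_divLR //.
Qed.
Lemma code_eq x y : (code x == code y) = (x == y).
Proof. by apply/eqP/eqP => [h|-> //]; rewrite -(decodeK x) h decodeK. Qed.
Lemma le_code x y : @enc_le P011 x y = lenat (code x) (code y).
Proof. by rewrite /enc_le /lenat /enc_adj !lvl_code !pos_code code_eq. Qed.

Definition bits (S : {set T}) := [seq decode n \in S | n <- codes].
Lemma size_bits S : size (bits S) = 12.
Proof. by rewrite size_map size_iota. Qed.
Lemma mem_bits S x : mem (bits S) (code x) = (x \in S).
Proof.
by rewrite /mem (nth_map 0) ?size_iota ?code_lt // nth_iota ?code_lt // add0n decodeK.
Qed.
Lemma allcodes (P : nat -> bool) : (forall x : T, P (code x)) -> all P codes.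
Proof.
move=> H; apply/allP => n; rewrite mem_iota add0n => /andP[_ hn].
by rewrite -(codeK hn).
Qed.
Lemma hascodes (P : nat -> bool) : has P codes -> exists x : T, P (code x).
Proof.
case/hasP => n; rewrite mem_iota add0n => /andP[_ hn] Pn.
by exists (decode n); rewrite codeK.
Qed.
Lemma has_code (P : nat -> bool) (x : T) : P (code x) -> has P codes.
Proof. by move=> h; apply/hasP; exists (code x) => //; rewrite mem_iota code_lt. Qed.
Lemma all_code (P : nat -> bool) (x : T) : all P codes -> P (code x).
Proof. by move/allP; apply; rewrite mem_iota code_lt. Qed.

Lemma mem_subs s : s \in subs (size s).
Proof.
elim: s => [|b s IH] //=.
by case: b; rewrite /= mem_cat; apply/orP; [left|right]; rewrite ?cats0; apply/mapP; exists s.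
Qed.

Lemma cand_mk (f : nat -> nat -> bool) n v : n < 12 -> v < 12 ->
  cand [seq [seq f n v | v <- codes] | n <- codes] n v = f n v.
Proof.
move=> hn hv.
by rewrite /cand (nth_map 0) ?size_iota // nth_iota // (nth_map 0) ?size_iota // nth_iota.
Qed.

Lemma minN_min x : minN (code x) -> x \in min_set (@enc_le P011).
Proof.
rewrite /minN allLE => H; rewrite inE; apply/forallP => y; apply/implyP => hyx.
have := all_code y H; rewrite /= -le_code hyx code_eq; exact.
Qed.

Lemma three_pts (a b x y z : T) : a != b -> (x == a) || (x == b) -> (y == a) || (y == b) ->
  (z == a) || (z == b) -> y != x -> (z == x) = false -> z == y.
Proof.
move=> nab /orP [] /eqP -> /orP [] /eqP -> /orP [] /eqP ->; rewrite ?eqxx //.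
Qed.

Theorem lemma7p2 :
  forall (D : {set enc_elt (size P011)}) (r : enc_elt (size P011) -> enc_elt (size P011)),
    down_set (@enc_le P011) D ->
    retraction_on (@enc_le P011) (~: D) r ->
    (four_crown_stack (@enc_le P011) (r @: (~: D)) \/
     two_antichain (@enc_le P011) (r @: (~: D))) ->
    (2 <= #|D :&: min_set (@enc_le P011)|)%N.
Proof.
move=> D r hD [hU hmono hidem] hR.
rewrite leqNgt; apply/negP => hlt.
have Rfix : forall x, x \in r @: (~: D) -> r x = x.
  by move=> x /imsetP [u hu ->]; exact: hidem.
have RU : forall x, x \in r @: (~: D) -> x \in ~: D.
  by move=> x /imsetP [u hu ->]; exact: hU.
have H : all (checkD (filter condN (subs 12))) (subs 12) := big.
have := allP H (bits D); rewrite -{1}(size_bits D) mem_subs => /(_ isT); clear H.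
rewrite /checkD.
have -> : downN (bits D) = true.
  rewrite /downN allLE; apply: allcodes => x; cbv beta; rewrite allLE; apply: allcodes => y; cbv beta.
  rewrite !mem_bits -le_code; case: ifP => // yD; case: ifP => // hxy; exact: hD yD hxy.
have -> : twoMins (bits D) = false.
  apply/negbTE/negP; rewrite /twoMins hasLE => /hascodes [x]; cbv beta.
  rewrite mem_bits; case: ifP => // xD; case: ifP => // mx; rewrite hasLE => /hascodes [y]; cbv beta.
  rewrite code_eq mem_bits; case: ifP => // nxy; case: ifP => // yD my.
  have : [set x; y] \subset D :&: min_set (@enc_le P011).
    apply/subsetP => z /set2P [] ->; rewrite in_setI.
    - by rewrite xD (minN_min mx).
    - by rewrite yD (minN_min my).
  by move/subset_leq_card; rewrite cards2 nxy => h; move: hlt; rewrite ltnNge h.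
move/allP => /(_ (bits (r @: (~: D)))).
have hcond : condN (bits (r @: (~: D))).
  rewrite /condN; case: hR => [[m [f [hm hf hcard hlef]]] | [h2 hinc]].
  - case: (anti2 _) => //.
    rewrite /stackN ifand; apply/andP; split.
    + rewrite allLE; apply: allcodes => x; cbv beta; rewrite mem_bits; case: ifP => // xR.
      have := hcard (f x) (hf x xR).
      set S := [set y in r @: (~: D) | f y == f x] => /eqP /cards2P [a [b [nab eS]]].
      have xS : x \in S by rewrite inE xR eqxx.
      have [y [yS nyx]] : exists y, y \in S /\ y != x.
        move: xS; rewrite eS !inE => /orP [] /eqP ->.
        * by exists b; rewrite !inE eqxx orbT eq_sym.
        * by exists a; rewrite !inE eqxx.
      have := yS; rewrite inE => /andP [yR /eqP fy].
      rewrite hasLE; apply: (has_code (x:=y)); cbv beta.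
      rewrite mem_bits yR code_eq nyx /incN -!le_code.
      have nxy : x != y by rewrite eq_sym.
      rewrite (hlef x y xR yR nxy) (hlef y x yR xR nyx) fy ltnn [~~ false]/=.
      rewrite allLE; apply: allcodes => z; cbv beta; rewrite mem_bits; case: ifP => // zR.
      rewrite /incN -!le_code code_eq.
      case hzx: (z == x).
        by move/eqP: hzx => ->; rewrite /enc_le eqxx.
      have nxz : x != z by rewrite eq_sym hzx.
      rewrite (hlef x z xR zR nxz) (hlef z x zR xR (negbT hzx)).
      case: (ltngtP (f x) (f z)) => // ezx.
      have zS : z \in S by rewrite inE zR ezx eqxx.
      move: xS yS zS; rewrite eS !inE => xS yS zS.
      exact: (three_pts nab xS yS zS nyx hzx).
    + have m0 : 0 < m by apply: leq_trans hm.
      have h0 := hcard 0 m0.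
      have h1 := hcard 1 hm.
      have : 0 < #|[set x in r @: (~: D) | f x == 0]| by rewrite h0.
      case/card_gt0P => a; rewrite inE => /andP [aR /eqP fa].
      have : 0 < #|[set x in r @: (~: D) | f x == 1]| by rewrite h1.
      case/card_gt0P => b; rewrite inE => /andP [bR /eqP fb].
      have nab : a != b by apply/eqP => e; move: fa; rewrite e fb.
      rewrite hasLE; apply: (has_code (x:=a)); cbv beta; rewrite mem_bits aR.
      rewrite hasLE; apply: (has_code (x:=b)); cbv beta; rewrite mem_bits bR code_eq nab.
      by rewrite -le_code hlef // fa fb.
  - have : #|r @: (~: D)| == 2 by rewrite h2.
    case/cards2P => a [b [nab eR]].
    have aR : a \in r @: (~: D) by rewrite eR !inE eqxx.
    have bR : b \in r @: (~: D) by rewrite eR !inE eqxx orbT.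
    suff -> : anti2 (bits (r @: (~: D))) by [].
    rewrite /anti2 hasLE; apply: (has_code (x:=a)); cbv beta.
    rewrite hasLE; apply: (has_code (x:=b)); cbv beta.
    rewrite code_eq nab /incN -!le_code (negbTE (hinc a b aR bR nab)).
    have nba : b != a by rewrite eq_sym.
    rewrite (negbTE (hinc b a bR aR nba)) [~~ false]/=.
    rewrite allLE; apply: allcodes => z; cbv beta; rewrite mem_bits eR !inE !code_eq.
    exact: eqxx.
rewrite mem_filter hcond -{1}(size_bits (r @: (~: D))) mem_subs => /(_ isT).
rewrite /checkR.
have -> : subsetN (bits (r @: (~: D))) (bits D) = true.
  rewrite /subsetN allLE; apply: allcodes => x; cbv beta; rewrite !mem_bits; case: ifP => // xR.
  by have := RU x xR; rewrite inE.
have inv : forall k x, x \in ~: D ->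
    cand (iter k (stepN (bits D)) (tbl0 (bits (r @: (~: D))))) (code x) (code (r x)).
  elim=> [|k IH] x hx.
  - rewrite /tbl0 /cand (nth_map 0) ?size_iota ?code_lt // nth_iota ?code_lt // add0n /row0.
    case: ifP => xR.
    + have xR' : x \in r @: (~: D) by rewrite -(mem_bits (r @: (~: D)) x).
      rewrite Rfix //.
      by rewrite (nth_map 0) ?size_iota ?code_lt // nth_iota ?code_lt // add0n eqxx.
    + by have := mem_bits (r @: (~: D)) (r x); rewrite /mem imset_f // => ->.
  - rewrite iterS /stepN cand_mk ?code_lt // IH //.
    rewrite allLE; apply: allcodes => y; cbv beta.
    rewrite mem_bits; case: ifP => // yD.
    have yU : y \in ~: D by rewrite inE yD.
    rewrite -!le_code; apply/andP; split; case: ifP => // hle;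
      rewrite hasLE; apply: (has_code (x:=r y)); cbv beta; rewrite IH // -le_code.
    + exact: hmono.
    + exact: hmono.
rewrite /refutedN hasLE => /hascodes [x]; cbv beta.
rewrite mem_bits; case: ifP => // xD /negP; apply.
rewrite hasLE; apply: (has_code (x:=r x)); apply: inv; by rewrite inE xD.
Qed.
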